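(* Let $\rho$ be a representation of $D^{2,2,2}$, let $\{i,j,k\}=\{1,2,3\}$, and let $n\ge1$. Then: 1. $\psi_i(a^{ij}_n)=\nu^0(y_iA^{kj}_n)$; 2. $\psi_j(a^{ij}_n)=\nu^0(y_jA^{kj}_n)$ for $n>1$, and $\psi_j(a^{ij}_1)=\nu^0(y_j(y_i+y_k)A^{kj}_1)$; 3. $\psi_k(y_ia^{ij}_n)=\nu^0(y_kA^{ji}_{n+1})$; 4. $\psi_i(A^{ij}_n)=\nu^0(y_i(y_j+y_k)a^{ik}_n)$; 5. $\psi_j(y_kA^{ij}_n)=\nu^0(y_j(x_k+y_i)a^{ik}_n)$; 6. $\psi_k(y_jA^{ij}_n)=\nu^0(y_ka^{ji}_{n+1})$.
   Context: $D^{2,2,2}$ is the modular lattice generated by $x_1,y_1,x_2,y_2,x_3,y_3$ subject only to $x_i\subseteq y_i$ ($i=1,2,3$), with a greatest element $I$ adjoined. Meet is written $ab$, join $a+b$. Atomic elements: for distinct $i,j$, let $k$ denote the third index. Define - $a^{ij}_0=I$ and $a^{ij}_n=x_i+y_ja^{jk}_{n-1}$ for $n\ge1$; - $A^{ij}_0=I$ and $A^{ij}_n=y_i+x_jA^{ki}_{n-1}$ for $n\ge1$. A representation $\rho$ of $D^{2,2,2}$ in a finite-dimensional vector space $X_0$ is a lattice morphism from $D^{2,2,2}$ to the subspace lattice of $X_0$, with $\rho(I)=X_0$. Write $X_i=\rho(x_i)\subseteq Y_i=\rho(y_i)$. Put $R=Y_1\oplus Y_2\oplus Y_3$ and $X^1_0=\{(\eta_1,\eta_2,\eta_3)\in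 R:\sum\eta_i=0\}$. Define subspaces of $R$: - $G_i$: triples with $i$-th coordinate in $Y_i$ and the others $0$; - $H_i$: triples with $i$-th coordinate in $X_i$ and the others $0$; - $G'_i$: triples with $i$-th coordinate in $X_i$; - $H'_i$: triples with $i$-th coordinate $0$. $\Phi^+\rho$ is the representation in $X^1_0$ with $\Phi^+\rho(y_i)=G'_i\cap X^1_0$, $\Phi^+\rho(x_i)=H'_i\cap X^1_0$, $\Phi^+\rho(I)=X^1_0$. Set $\nu^1(a)=\Phi^+\rho(a)\subseteq R$. $\nu^0$ is the representation in $R$ with $\nu^0(y_i)=X^1_0+G_i$, $\nu^0(x_i)=X^1_0+H_i$, $\nu^0(I)=R$. The joint map is $\psi_i(a)=X^1_0+G_i\cap(H'_i+\nu^1(a))$. *)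

(* Defs.v *)
From HB Require Import structures.
From mathcomp Require Import all_boot all_order all_algebra.
Set Implicit Arguments. Unset Strict Implicit. Unset Printing Implicit Defensive.
Import GRing.Theory.
Local Open Scope ring_scope.

(* Lattice terms over the generators x_i, y_i (i : 'I_3, indices 1,2,3 of the
   paper are 0,1,2 here) and the adjoined top I.  A representation of
   D^{2,2,2} is determined by the images of generators; evaluating a term
   gives the image of the element of D^{2,2,2} it denotes. *)
Inductive lterm : Type :=
| Tx of 'I_3
| Ty of 'I_3
| TI
| Tmeet of lterm & lterm
| Tjoin of lterm & lterm.

Definition third (i j : 'I_3) : 'I_3 := inord (3 - i - j).

Fixpoint at_a (n : nat) (i j : 'I_3) : lterm :=
  match n with
  | 0 => TI
  | m.+1 => Tjoin (Tx i) (Tmeet (Ty j) (at_a m j (third i j)))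
  end.

Fixpoint at_A (n : nat) (i j : 'I_3) : lterm :=
  match n with
  | 0 => TI
  | m.+1 => Tjoin (Ty i) (Tmeet (Tx j) (at_A m (third i j) i))
  end.

Section Rep.
Variables (K : fieldType) (vT : vectType K).

Fixpoint eval_rep (gx gy : 'I_3 -> {vspace vT}) (top : {vspace vT}) (t : lterm)
  : {vspace vT} :=
  match t with
  | Tx i => gx i
  | Ty i => gy i
  | TI => top
  | Tmeet a b => (eval_rep gx gy top a :&: eval_rep gx gy top b)%VS
  | Tjoin a b => (eval_rep gx gy top a + eval_rep gx gy top b)%VS
  end.
End Rep.

Section Construction.
Variables (K : fieldType) (vT : vectType K).
(* X_0 is the whole space vT; X i = rho(x_i), Y i = rho(y_i). *)
Variables (X Y : 'I_3 -> {vspace vT}).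

Local Notation V3 := {ffun 'I_3 -> vT}.

Definition coord (i : 'I_3) : 'Hom(V3, vT) := linfun (fun f : V3 => f i).
Definition inj (i : 'I_3) : 'Hom(vT, V3) :=
  linfun (fun v : vT => [ffun j => if j == i then v else 0] : V3).
Definition sumc : 'Hom(V3, vT) := linfun (fun f : V3 => \sum_i f i).

(* R = Y_1 (+) Y_2 (+) Y_3, as a subspace of vT^3 *)
Definition Rsp : {vspace V3} := (\bigcap_i (coord i @^-1: Y i))%VS.
Definition X10 : {vspace V3} := (Rsp :&: lker sumc)%VS.
Definition Gsp (i : 'I_3) : {vspace V3} := (inj i @: Y i)%VS.
Definition Hsp (i : 'I_3) : {vspace V3} := (inj i @: X i)%VS.
Definition G'sp (i : 'I_3) : {vspace V3} := (Rsp :&: (coord i @^-1: X i))%VS.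
Definition H'sp (i : 'I_3) : {vspace V3} := (Rsp :&: lker (coord i))%VS.

Definition rho (t : lterm) : {vspace vT} := eval_rep X Y fullv t.
Definition nu1 (t : lterm) : {vspace V3} :=
  eval_rep (fun i => H'sp i :&: X10)%VS (fun i => G'sp i :&: X10)%VS X10 t.
Definition nu0 (t : lterm) : {vspace V3} :=
  eval_rep (fun i => X10 + Hsp i)%VS (fun i => X10 + Gsp i)%VS Rsp t.

Definition psi (i : 'I_3) (t : lterm) : {vspace V3} :=
  (X10 + (Gsp i :&: (H'sp i + nu1 t)))%VS.
End Construction.

(* Main.v *)
Require Import Defs.
From HB Require Import structures.
From mathcomp Require Import all_boot all_order all_algebra.
Set Implicit Arguments. Unset Strict Implicit. Unset Printing Implicit Defensive.
Import GRing.Theory.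
Local Open Scope ring_scope.

Lemma thirdE (i j k : 'I_3) : i != j -> j != k -> i != k -> third i j = k.
Proof.
move: i j k => [[|[|[|//]]] ?] [[|[|[|//]]] ?] [[|[|[|//]]] ?] //= _ _ _;
  by apply/val_inj; rewrite /third /= inordK.
Qed.

Lemma idx3 (i j k l : 'I_3) : i != j -> j != k -> i != k -> [|| l == i, l == j | l == k].
Proof.
move: i j k l => [[|[|[|//]]] ?] [[|[|[|//]]] ?] [[|[|[|//]]] ?] [[|[|[|//]]] ?] //=.
Qed.

Lemma sum3 (V : zmodType) (f : 'I_3 -> V) (i j k : 'I_3) : i != j -> j != k -> i != k ->
  \sum_l f l = f i + f j + f k.
Proof.
move=> hij hjk hik.
rewrite (bigD1 i) //= (bigD1 j) 1?eq_sym //= (bigD1 k) /=; last by rewrite !(eq_sym k) hik hjk.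
rewrite big_pred0 ?addr0 ?addrA // => l.
by case: (orP (idx3 l hij hjk hik)) => [/eqP->|/orP[]/eqP->]; rewrite ?eqxx ?andbF.
Qed.

Lemma ffB (vT : zmodType) (f g : {ffun 'I_3 -> vT}) l : (f - g) l = f l - g l.
Proof. by rewrite !ffunE. Qed.
Lemma ffD (vT : zmodType) (f g : {ffun 'I_3 -> vT}) l : (f + g) l = f l + g l.
Proof. by rewrite !ffunE. Qed.
Section S.
Variables (K : fieldType) (vT : vectType K) (X Y : 'I_3 -> {vspace vT}).
Hypothesis hXY : forall i, (X i <= Y i)%VS.
Local Notation V3 := {ffun 'I_3 -> vT}.
Local Notation cd i := (Defs.coord vT i).
Local Notation R := (Rsp Y).
Local Notation X10 := (Defs.X10 Y).

Definition cdf (i : 'I_3) (f : V3) : vT := f i.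
Fact cdf_lin i : linear (cdf i). Proof. by move=> a f g; rewrite /cdf !ffunE. Qed.
HB.instance Definition _ i := GRing.isLinear.Build K V3 vT *:%R (cdf i) (cdf_lin i).
Definition injf (i : 'I_3) (v : vT) : V3 := [ffun j => if j == i then v else 0].
Fact injf_lin i : linear (injf i).
Proof. by move=> a f g; apply/ffunP => l; rewrite /injf !ffunE; case: eqP; rewrite ?scaler0 ?addr0. Qed.
HB.instance Definition _ i := GRing.isLinear.Build K vT V3 *:%R (injf i) (injf_lin i).
Definition sumf (f : V3) : vT := \sum_i f i.
Fact sumf_lin : linear sumf.
Proof. by move=> a f g; rewrite /sumf scaler_sumr -big_split; apply: eq_bigr => l _; rewrite !ffunE. Qed.
HB.instance Definition _ := GRing.isLinear.Build K V3 vT *:%R sumf sumf_lin.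
Lemma cdE i (f : V3) : Defs.coord vT i f = f i.
Proof. exact: (lfunE (cdf i) f). Qed.
Lemma injE i v : Defs.inj vT i v = [ffun l => if l == i then v else 0] :> V3.
Proof. exact: (lfunE (injf i) v). Qed.
Lemma sumcE (f : V3) : Defs.sumc vT f = \sum_l f l.
Proof. exact: (lfunE sumf f). Qed.

Lemma memR (f : V3) : (f \in R) = [forall l, f l \in Y l].
Proof.
rewrite memvE; apply/subv_bigcapP/forallP => H l.
  by move: (H l isT); rewrite -memvE -memv_preim cdE.
by move=> _; rewrite -memvE -memv_preim cdE.
Qed.

Lemma memX10 (f : V3) : (f \in X10) = (f \in R) && (\sum_l f l == 0).
Proof. by rewrite /Defs.X10 memv_cap memv_ker sumcE. Qed.

Lemma RY (f : V3) l : f \in R -> f l \in Y l.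
Proof. by rewrite memR => /forallP. Qed.

Lemma X10R : (X10 <= R)%VS.
Proof. exact: capvSl. Qed.

Lemma inj_app i v l : (Defs.inj vT i v : V3) l = if l == i then v else 0.
Proof. have := injE i v; move/(congr1 (fun f : V3 => f l)) => ->. by rewrite ffunE. Qed.

Lemma sum_inj i v : \sum_l (Defs.inj vT i v : V3) l = v.
Proof.
rewrite (bigD1 i) //= inj_app eqxx big1 ?addr0 // => l /negbTE hl.
by rewrite inj_app hl.
Qed.

Lemma inj_R i v : v \in Y i -> (Defs.inj vT i v : V3) \in R.
Proof.
move=> hv; rewrite memR; apply/forallP => l; rewrite inj_app.
by case: eqP => [->|_] //; rewrite mem0v.
Qed.

Lemma inj_i i v : (Defs.inj vT i v : V3) i = v.
Proof. by rewrite inj_app eqxx. Qed.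

Definition Wsp : {vspace vT} := (\sum_l Y l)%VS.
Definition r (t : lterm) := eval_rep X Y Wsp t.
Definition T i (U : {vspace vT}) : {vspace V3} := (X10 :&: cd i @^-1: U)%VS.
Definition Q (U : {vspace vT}) : {vspace V3} := (R :&: Defs.sumc vT @^-1: U)%VS.

Lemma memT i U f : (f \in T i U) = (f \in X10) && (f i \in U).
Proof. by rewrite memv_cap -memv_preim cdE. Qed.
Lemma memQ U (f : V3) : (f \in Q U) = (f \in R) && (\sum_l f l \in U).
Proof. by rewrite memv_cap -memv_preim sumcE. Qed.

Lemma YW l : (Y l <= Wsp)%VS.
Proof. exact: (sumv_sup l). Qed.
Lemma XW l : (X l <= Wsp)%VS.
Proof. exact: subv_trans (hXY l) (YW l). Qed.

Lemma rW t : (r t <= Wsp)%VS.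
Proof.
elim: t => [l|l||a ha b hb|a ha b hb] /=; rewrite ?XW ?YW ?subvv //.
  exact: subv_trans (capvSl _ _) ha.
by rewrite subv_add ha hb.
Qed.

Lemma sumR (f : V3) : f \in R -> \sum_l f l \in Wsp.
Proof. by move=> hf; apply: memv_sumr => l _; apply: RY. Qed.

End S.
Section S2.
Variables (K : fieldType) (vT : vectType K) (X Y : 'I_3 -> {vspace vT}).
Hypothesis hXY : forall i, (X i <= Y i)%VS.
Local Notation V3 := {ffun 'I_3 -> vT}.
Local Notation cd i := (Defs.coord vT i).
Local Notation R := (Rsp Y).
Local Notation X10 := (Defs.X10 Y).
Local Notation T := (T Y).
Local Notation Q := (Q Y).
Local Notation r := (r X Y).
Local Notation X10R := (@X10R K vT Y).

Definition mkf (i j : 'I_3) (a b c : vT) : V3 :=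
  [ffun l => if l == i then a else if l == j then b else c].

Section D.
Variables (i j k : 'I_3) (hij : i != j) (hjk : j != k) (hik : i != k).

Lemma mkf_i a b c : mkf i j a b c i = a.
Proof. by rewrite ffunE eqxx. Qed.
Lemma mkf_j a b c : mkf i j a b c j = b.
Proof. by rewrite ffunE eq_sym (negbTE hij) eqxx. Qed.
Lemma mkf_k a b c : mkf i j a b c k = c.
Proof. by rewrite ffunE eq_sym (negbTE hik) eq_sym (negbTE hjk). Qed.

Lemma memX10E (f : V3) : (f \in X10) =
  [&& f i \in Y i, f j \in Y j, f k \in Y k & f i + f j + f k == 0].
Proof.
rewrite memX10 memR (sum3 f hij hjk hik).
apply/idP/idP => [/andP[/forallP H ->]|/and4P[a b c ->]]; rewrite ?H ?andbT //.
by apply/forallP => l; case/or3P: (idx3 l hij hjk hik) => /eqP->.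
Qed.

Lemma mkf_X10 a b c : a \in Y i -> b \in Y j -> c \in Y k -> a + b + c = 0 ->
  mkf i j a b c \in X10.
Proof. by move=> ha hb hc h; rewrite memX10E mkf_i mkf_j mkf_k ha hb hc h eqxx. Qed.

Lemma X10_i (f : V3) : f \in X10 -> f i = - (f j + f k).
Proof. by rewrite memX10E => /and4P[_ _ _]; rewrite -addrA addr_eq0 => /eqP. Qed.

Lemma pi_TT U U' : (cd i @: (T j U :&: T k U'))%VS = (Y i :&: (U :&: Y j + U' :&: Y k))%VS.
Proof.
apply/vspaceP => w; apply/memv_imgP/idP.
  case=> f /memv_capP[]; rewrite !memT => /andP[hf hu] /andP[_ hu'] ->.
  have hf' := hf; rewrite memX10E in hf'; case/and4P: hf' => hi hj hk _.
  rewrite cdE memv_cap hi (X10_i hf) memvN.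
  by apply: memv_add; rewrite memv_cap ?hu ?hu' ?hj ?hk.
move=> /memv_capP[hw /memv_addP[u hu [u' hu' Ew]]].
move: hu hu'; rewrite !memv_cap => /andP[hu huY] /andP[hu' hu'Y].
exists (mkf i j w (- u) (- u')); last by rewrite cdE mkf_i.
rewrite memv_cap !memT mkf_j mkf_k !memvN hu hu' !andbT.
have hX : mkf i j w (- u) (- u') \in X10.
  by apply: mkf_X10; rewrite ?memvN // -addrA -opprD Ew subrr.
by rewrite hX.
Qed.

Lemma pi_T U : (cd i @: T i U)%VS = (U :&: Y i :&: (Y j + Y k))%VS.
Proof.
apply/vspaceP => w; apply/memv_imgP/idP.
  case=> f; rewrite memT => /andP[hf hu] ->.
  have hf' := hf; rewrite memX10E in hf'; case/and4P: hf' => hi hj hk _.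
  rewrite cdE !memv_cap hu hi (X10_i hf) memvN.
  by apply: memv_add.
move=> /memv_capP[/memv_capP[hwU hw] /memv_addP[u hu [u' hu' Ew]]].
exists (mkf i j w (- u) (- u')); last by rewrite cdE mkf_i.
rewrite memT mkf_i hwU andbT.
by apply: mkf_X10; rewrite ?memvN // -addrA -opprD Ew subrr.
Qed.
End D.

Lemma T_sub i U : (T i U <= X10)%VS.
Proof. exact: capvSl. Qed.

Lemma TS i U : T i U = T i (U :&: Y i).
Proof.
apply/vspaceP => f; rewrite !memT memv_cap.
by case hf: (f \in X10) => //=; rewrite (RY (f:=f)) ?andbT // (subvP X10R).
Qed.

Lemma TM i U U' : (T i U :&: T i U')%VS = T i (U :&: U').
Proof.
apply/vspaceP => f; rewrite memv_cap !memT memv_cap.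
by case: (f \in X10).
Qed.

Lemma TX i U : (Y i <= U)%VS -> T i U = X10.
Proof.
move=> hU; apply/vspaceP => f; rewrite memT.
case hf: (f \in X10) => //=; apply: (subvP hU).
by rewrite (RY (f:=f)) // (subvP X10R).
Qed.

Lemma TJ i U Wv : (Wv <= X10)%VS -> (T i U + Wv)%VS = T i (U + cd i @: Wv).
Proof.
move=> hW; apply/subv_anti/andP; split.
  rewrite subv_add; apply/andP; split; apply/subvP => f.
    by rewrite !memT => /andP[-> hu] /=; rewrite -[_ i]addr0; apply: memv_add hu (mem0v _).
  move=> hf; rewrite memT (subvP hW) //= -cdE.
  by rewrite -[cd i f]add0r; apply: memv_add (mem0v _) (memv_img _ hf).
apply/subvP => f; rewrite memT => /andP[hf /memv_addP[u hu [w /memv_imgP[g hg ->] Ef]]].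
have -> : f = (f - g) + g by rewrite subrK.
apply: memv_add => //.
rewrite memT memvB // ?(subvP hW) //=.
by rewrite !ffunE Ef cdE addrK.
Qed.

Lemma nu1x i : nu1 X Y (Tx i) = T i 0.
Proof.
apply/vspaceP => f /=; rewrite memv_cap memT memv_cap memv_ker cdE memv0.
case hf: (f \in X10); rewrite ?andbF ?andbT //=.
by rewrite (subvP X10R).
Qed.

Lemma nu1y i : nu1 X Y (Ty i) = T i (X i).
Proof.
apply/vspaceP => f /=; rewrite memv_cap memT memv_cap -memv_preim cdE.
case hf: (f \in X10); rewrite ?andbF ?andbT //=.
by rewrite (subvP X10R).
Qed.

Lemma nu1_sub t : (nu1 X Y t <= X10)%VS.
Proof.
elim: t => [l|l||a ha b hb|a ha b hb] /=; rewrite ?capvSr ?subvv //.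
  exact: subv_trans (capvSl _ _) ha.
by rewrite subv_add ha hb.
Qed.

Lemma Q_X10 U : (X10 <= Q U)%VS.
Proof.
apply/subvP => f hf; rewrite memQ (subvP X10R) //=.
by move: hf; rewrite memX10 => /andP[_ /eqP->]; rewrite mem0v.
Qed.

Lemma psiQ i t : psi X Y i t = Q (cd i @: nu1 X Y t).
Proof.
have hN := nu1_sub t.
apply/subv_anti/andP; split.
  rewrite subv_add Q_X10 /=; apply/subvP => f /memv_capP[/memv_imgP[y hy ->]].
  move=> /memv_addP[h hh [w hw Ef]].
  rewrite memQ inj_R //= sum_inj.
  have : (Defs.inj vT i y : V3) i = (h + w) i by rewrite Ef.
  rewrite inj_i ffunE => ->.
  move: hh; rewrite memv_cap memv_ker cdE => /andP[_ /eqP->]; rewrite add0r -cdE.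
  exact: memv_img.
apply/subvP => f; rewrite memQ => /andP[hf /memv_imgP[w hw Ew]].
have hwX : w \in X10 by apply: (subvP hN).
have hwi : w i \in Y i by apply: RY; rewrite (subvP X10R).
have -> : f = (f - Defs.inj vT i (w i)) + Defs.inj vT i (w i) by rewrite subrK.
apply: memv_add.
  rewrite memX10 memvB ?inj_R //=.
  have -> : \sum_l (f - Defs.inj vT i (w i)) l = \sum_l f l - \sum_l (Defs.inj vT i (w i) : V3) l.
    by rewrite -sumrB; apply: eq_bigr => l _; rewrite !ffunE.
  by rewrite sum_inj Ew cdE; apply/eqP; exact: subrr.
apply/memv_capP; split; first exact: memv_img.
have -> : Defs.inj vT i (w i) = (Defs.inj vT i (w i) - w) + w :> V3 by rewrite subrK.
apply: memv_add => //.
rewrite memv_cap memv_ker cdE !ffunE inj_i subrr eqxx andbT.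
by rewrite memvB ?inj_R ?(subvP X10R).
Qed.
End S2.
Lemma third_ne (i j : 'I_3) : i != j -> (i != third i j) && (j != third i j).
Proof.
move: i j => [[|[|[|//]]] ?] [[|[|[|//]]] ?] //= _;
  by rewrite /third /eq_op /= inordK.
Qed.

Section S3.
Variables (K : fieldType) (vT : vectType K) (X Y : 'I_3 -> {vspace vT}).
Hypothesis hXY : forall i, (X i <= Y i)%VS.
Local Notation V3 := {ffun 'I_3 -> vT}.
Local Notation cd i := (Defs.coord vT i).
Local Notation R := (Rsp Y).
Local Notation X10 := (Defs.X10 Y).
Local Notation T := (T Y).
Local Notation Q := (Q Y).
Local Notation r := (r X Y).
Local Notation Wsp := (Wsp Y).
Local Notation X10R := (@X10R K vT Y).
Local Notation nu1 := (nu1 X Y).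

Lemma rI : r TI = Wsp. Proof. by []. Qed.
Lemma rX l : r (Tx l) = X l. Proof. by []. Qed.
Lemma rY l : r (Ty l) = Y l. Proof. by []. Qed.
Lemma rM a b : r (Tmeet a b) = (r a :&: r b)%VS. Proof. by []. Qed.
Lemma rJ a b : r (Tjoin a b) = (r a + r b)%VS. Proof. by []. Qed.
Lemma nu1I : nu1 TI = X10. Proof. by []. Qed.
Lemma nu1M a b : nu1 (Tmeet a b) = (nu1 a :&: nu1 b)%VS. Proof. by []. Qed.
Lemma nu1J a b : nu1 (Tjoin a b) = (nu1 a + nu1 b)%VS. Proof. by []. Qed.
Lemma at_aS n i j : at_a n.+1 i j = Tjoin (Tx i) (Tmeet (Ty j) (at_a n j (third i j))).
Proof. by []. Qed.
Lemma at_AS n i j : at_A n.+1 i j = Tjoin (Ty i) (Tmeet (Tx j) (at_A n (third i j) i)).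
Proof. by []. Qed.

Lemma pi_T' i j k U : i != j -> j != k -> i != k ->
  (cd i @: T j U)%VS = (Y i :&: (U :&: Y j + Y k))%VS.
Proof.
move=> hij hjk hik.
have <- : (T j U :&: T k fullv)%VS = T j U.
  by rewrite (TX (subvf _)); apply/capv_idPl/T_sub.
by rewrite pi_TT // (capvC fullv) capvf.
Qed.

Lemma QM U U' : Q (U :&: U') = (Q U :&: Q U')%VS.
Proof.
apply/vspaceP => f; rewrite memv_cap !memQ memv_cap.
by case: (f \in R).
Qed.

Lemma QS U U' : (U <= U')%VS -> (Q U <= Q U')%VS.
Proof.
move=> h; apply/subvP => f; rewrite !memQ => /andP[-> hf] /=.
exact: (subvP h).
Qed.

Lemma QJ U U' : (U <= Wsp)%VS -> Q (U + U') = (Q U + Q U')%VS.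
Proof.
move=> hU; apply/subv_anti/andP; split; last first.
  by rewrite subv_add !QS ?addvSl ?addvSr.
apply/subvP => f; rewrite memQ => /andP[hf /memv_addP[u hu [v hv Ef]]].
have /memv_sumP[vs hvs Eu] : u \in Wsp by apply: (subvP hU).
pose g : V3 := [ffun l => vs l].
have hg : g \in R by rewrite memR; apply/forallP => l; rewrite ffunE hvs.
have Sg : \sum_l g l = u by rewrite Eu; apply: eq_bigr => l _; rewrite ffunE.
have -> : f = g + (f - g) by rewrite addrC subrK.
apply: memv_add; first by rewrite memQ hg Sg.
rewrite memQ memvB //=.
have -> : \sum_l (f - g) l = \sum_l f l - \sum_l g l.
  by rewrite -sumrB; apply: eq_bigr => l _; rewrite !ffunE.
by rewrite Ef Sg addrC addKr.
Qed.

Lemma Qbase l Z : (Z <= Y l)%VS -> (X10 + (Defs.inj vT l @: Z))%VS = Q Z.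
Proof.
move=> hZ; apply/subv_anti/andP; split.
  rewrite subv_add Q_X10 /=; apply/subvP => f /memv_imgP[z hz ->].
  by rewrite memQ inj_R ?sum_inj // (subvP hZ).
apply/subvP => f; rewrite memQ => /andP[hf hs].
have -> : f = (f - Defs.inj vT l (\sum_i f i)) + Defs.inj vT l (\sum_i f i) by rewrite subrK.
apply: memv_add; last exact: memv_img.
rewrite memX10 memvB ?inj_R ?(subvP hZ) //=.
have -> : \sum_i (f - Defs.inj vT l (\sum_i f i)) i = \sum_i f i - \sum_i (Defs.inj vT l (\sum_i f i) : V3) i.
  by rewrite -sumrB; apply: eq_bigr => i _; rewrite !ffunE.
by rewrite sum_inj subrr.
Qed.

Lemma nu0Q t : nu0 X Y t = Q (r t).
Proof.
elim: t => [l|l||a ha b hb|a ha b hb].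
- exact: Qbase.
- exact: Qbase.
- apply/vspaceP => f /=; rewrite memQ.
  by case hf: (f \in R) => //=; rewrite sumR.
- by rewrite rM QM -ha -hb.
- by rewrite rJ QJ ?rW -?ha -?hb.
Qed.

Lemma Xa m i j : (X i <= r (at_a m i j))%VS.
Proof. by case: m => [|m]; rewrite ?XW // at_aS rJ addvSl. Qed.

Lemma nu1_a n i j : i != j -> nu1 (at_a n i j) = T i (r (at_A n (third i j) j)).
Proof.
elim: n i j => [|n IH] i j hij.
  by rewrite nu1I rI TX ?YW.
have /andP[hik hjk] := third_ne hij.
set k := third i j in hik hjk *.
have tjk : third j k = i by apply: thirdE; rewrite // eq_sym.
have tkj : third k j = i by apply: thirdE; rewrite // eq_sym.
rewrite at_aS nu1J nu1M nu1x nu1y -/k IH // tjk TM TJ; last exact: T_sub.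
rewrite add0v (pi_T' (k:=k)) // at_AS tkj rJ rM rX rY.
rewrite TS [RHS]TS; congr T.
rewrite (capv_idPl (subv_trans (capvSl _ _) (hXY j))).
by rewrite capvC capvA capvv addvC capvC.
Qed.

Lemma nu1_A n i j : i != j -> nu1 (at_A n i j) = T i (r (at_a n i (third i j))).
Proof.
elim: n i j => [|n IH] i j hij.
  by rewrite nu1I rI TX ?YW.
have /andP[hik hjk] := third_ne hij.
set k := third i j in hik hjk *.
have tki : third k i = j by apply: thirdE; rewrite // eq_sym.
have tik : third i k = j by apply: thirdE; rewrite // eq_sym.
rewrite at_AS nu1J nu1M nu1x nu1y -/k IH 1?eq_sym // tki TJ; last first.
  exact: subv_trans (capvSl _ _) (T_sub _ _ _).
rewrite pi_TT // ?(eq_sym j) // cap0v add0v at_aS tik rJ rM rX rY.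
rewrite TS [RHS]TS; congr T.
rewrite (capvC (Y i)) (vspace_modl _ (hXY i)) -capvA capvv.
by rewrite (capvC (Y k)).
Qed.
End S3.
Theorem mainTheorem9 (K : fieldType) (vT : vectType K)
  (X Y : 'I_3 -> {vspace vT}) (hXY : forall i, (X i <= Y i)%VS)
  (i j k : 'I_3) (hij : i != j) (hjk : j != k) (hik : i != k)
  (n : nat) (hn : (1 <= n)%N) :
  psi X Y i (at_a n i j) = nu0 X Y (Tmeet (Ty i) (at_A n k j))
   /\ ((1 < n)%N -> psi X Y j (at_a n i j) = nu0 X Y (Tmeet (Ty j) (at_A n k j)))
   /\ psi X Y j (at_a 1 i j) =
        nu0 X Y (Tmeet (Ty j) (Tmeet (Tjoin (Ty i) (Ty k)) (at_A 1 k j)))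
   /\ psi X Y k (Tmeet (Ty i) (at_a n i j)) = nu0 X Y (Tmeet (Ty k) (at_A n.+1 j i))
   /\ psi X Y i (at_A n i j) =
        nu0 X Y (Tmeet (Ty i) (Tmeet (Tjoin (Ty j) (Ty k)) (at_a n i k)))
   /\ psi X Y j (Tmeet (Ty k) (at_A n i j)) =
        nu0 X Y (Tmeet (Ty j) (Tmeet (Tjoin (Tx k) (Ty i)) (at_a n i k)))
   /\ psi X Y k (Tmeet (Ty j) (at_A n i j)) = nu0 X Y (Tmeet (Ty k) (at_a n.+1 j i)).
Proof.
have hji : j != i by rewrite eq_sym.
have hkj : k != j by rewrite eq_sym.
have hki : k != i by rewrite eq_sym.
have tij : third i j = k by apply: thirdE.
have tjk : third j k = i by apply: thirdE.
have tki : third k i = j by apply: thirdE.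
have tkj : third k j = i by apply: thirdE.
have tji : third j i = k by apply: thirdE.
have tik : third i k = j by apply: thirdE.
rewrite !psiQ !(nu0Q hXY).
case: n hn => [//|m] _.
have key Z : ((Y k + Z) :&: Y i + Y k = (Y k + Z) :&: (Y i + Y k))%VS.
  by rewrite vspace_modr // addvSl.
split.
  rewrite nu1_a // tij (@pi_T _ _ Y i j k) // rM rY.
  have hA : (r X Y (at_A m.+1 k j) <= Y j + Y k)%VS.
    rewrite at_AS rJ rY subv_add addvSr.
    exact: subv_trans (capvSl _ _) (subv_trans (hXY j) (addvSl _ _)).
  by rewrite (capv_idPl (subv_trans (capvSl _ _) hA)) capvC.
split.
  move=> hm; case: m hm => [//|m] _.
  rewrite nu1_a // tij (@pi_T' _ _ Y j i k) // rM rY at_AS tkj rJ rY rM rX key.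
  congr (Q Y (Y j :&: _)); apply/capv_idPl; rewrite subv_add addvSr.
  apply: subv_trans (capvSr _ _) _.
  rewrite at_AS rJ rY subv_add addvSl.
  exact: subv_trans (capvSl _ _) (subv_trans (hXY k) (addvSr _ _)).
split.
  rewrite nu1_a // tij (@pi_T' _ _ Y j i k) // !rM !rY rJ !rY at_AS tkj rJ rY rM rX key.
  by rewrite (capvC (Y i + Y k)%VS).
split.
  rewrite nu1M nu1y nu1_a // tij TM (@pi_T' _ _ Y k i j) // rM rY (at_AS m.+1 j i) tji rJ rY rM rX.
  by rewrite (capv_idPl (subv_trans (capvSl _ _) (hXY i))) addvC.
split.
  rewrite nu1_A // tij (@pi_T _ _ Y i j k) // !rM rY rJ !rY.
  by rewrite (capvC (r X Y _) (Y i)) -capvA (capvC (r X Y _)).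
split.
  rewrite nu1M nu1y nu1_A // tij (@pi_TT _ _ Y j k i) // !rM rY rJ rX rY.
  rewrite (capv_idPl (hXY k)) (capvC _ (Y i)) vspace_modl //.
  rewrite at_aS rJ rX; apply: subv_trans (addvSr _ _).
  by rewrite rM rY subv_cap hXY (Xa hXY).
rewrite nu1M nu1y nu1_A // tij (@pi_TT _ _ Y k j i) // rM rY (at_aS m.+1 j i) tji rJ rX rM rY.
by rewrite (capv_idPl (hXY j)) (capvC _ (Y i)).
Qed.
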